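(* If the second-order Lagrangian $L$ is homogeneous, then its Hilbert forms satisfy $i^i_l\vartheta^m=0$, $i^{ij}_l\vartheta^m=0$ and $i^{ijk}_l\vartheta^m=0$ for all indices $i,j,k,l,m\in\{1,2\}$.
   Context: Let $E$ be a smooth manifold of dimension $n$ with local coordinates $(u^\alpha)$. For $k\ge 1$, $\mathcal F^k_{(2)}E$ denotes the bundle of $k$-th order 2-frames in $E$ (regular $k$-th order 2-velocities, i.e. $k$-jets at $0$ of maps $\mathbb R^2\to E$ of rank 2 at $0$), with induced coordinates $u^\alpha_{i_1\cdots i_s}$ ($0\le s\le k$, indices in $\{1,2\}$, totally symmetric in the subscripts). Pull-backs along the projections $\mathcal F^l_{(2)}E\to\mathcal F^k_{(2)}E$ are omitted. $\#(i_1\cdots i_s)$ denotes the number of distinct rearrangements of $(i_1,\dots,i_s)$; repeated indices in $\{1,2\}$ are summed. The total derivatives are the vector fields along $\mathcal F^{k+1}_{(2)}E\to\mathcal F^k_{(2)}E$ given by $\mathbf T_i=\sum_{s=0}^k \frac{1}{\#(i_1\cdots i_s)}u^\alpha_{i i_1\cdots i_s}\,\partial/\partial u^\alpha_{i_1\cdots i_s}$, and the vertical endomorphisms are the type $(1,1)$ tensor fields on $\mathcal F^{k+1}_{(2)}E$ given by $S^j=\sum_{s=0}^k \frac{s+1}{\#(i_1\cdots i_s)}\,\partial/\partial u^\alpha_{j i_1\cdots i_s}\otimes du^\alpha_{i_1\cdots i_s}$. The $S^i$ commute and $S^{i_1\cdots i_s}$ denotes their composite. On forms, $S^i$ acts as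 the degree-zero derivation $(S^i\omega)(X_1,\dots,X_r)=\sum_a \omega(X_1,\dots,S^iX_a,\dots,X_r)$ (zero on functions). The fundamental vector fields are $\Delta^{i_1\cdots i_s}_i=S^{i_1\cdots i_s}(\mathbf T_i)$, well-defined vector fields on $\mathcal F^{k+1}_{(2)}E$. Contraction with $\mathbf T_i$ and with $\Delta^{i_1\cdots i_s}_i$ is denoted $i_i$ and $i^{i_1\cdots i_s}_i$; the corresponding Lie derivatives are $d_i=d\,i_i+i_i\,d$ and $d^{i_1\cdots i_s}_i=d\,i^{i_1\cdots i_s}_i+i^{i_1\cdots i_s}_i d$. The $d_i$ commute and $d_{j_1\cdots j_s}$ denotes their composite. A second-order Lagrangian is a smooth function $L$ on (an open subset of) $\mathcal F^2_{(2)}E$; it is homogeneous if $d^i_jL=\delta^i_jL$ and $d^{ik}_jL=0$ for all $i,j,k$. Its Hilbert forms are the 1-forms $\vartheta^i=(S^i-\tfrac12 d_jS^{ji})\,dL$ on $\mathcal F^3_{(2)}E$. *)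

(* Defs.v *)
From HB Require Import structures.
From mathcomp Require Import all_boot all_order all_algebra.
From mathcomp Require Import all_classical all_reals all_analysis.
Set Implicit Arguments. Unset Strict Implicit. Unset Printing Implicit Defensive.
Import Order.TTheory GRing.Theory Num.Theory.
Import numFieldNormedType.Exports.
Local Open Scope classical_set_scope.
Local Open Scope ring_scope.

(* Symmetric multi-indices over {1,2} of order <= 3 are encoded by columns
   c : 'I_10, c <-> (p,q) = (number of 1's, number of 2's), listed by level:
   ()  (1) (2)  (11) (12) (22)  (111) (112) (122) (222).
   Columns 0..5 are exactly the multi-indices of order <= 2. *)
Definition pq_tab : seq (nat * nat) :=
  [:: (0,0); (1,0); (0,1); (2,0); (1,1); (0,2); (3,0); (2,1); (1,2); (0,3)]%N.
Definition pq (c : 'I_10) : nat * nat := nth (0,0)%N pq_tab c.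
Definition lev (c : 'I_10) : nat := ((pq c).1 + (pq c).2)%N.
(* column of the multi-index with p ones and q twos (meaningful for p+q <= 3) *)
Definition colof (p q : nat) : 'I_10 := inord ((p + q) * (p + q).+1 %/ 2 + q)%N.
(* the multi-index j I (index j in {1,2} encoded as j : 'I_2, 0 <-> 1, 1 <-> 2) *)
Definition shift (j : 'I_2) (c : 'I_10) : 'I_10 :=
  colof ((pq c).1 + (j == 0 :> nat))%N ((pq c).2 + (j == 1 :> nat))%N.

Section Frames.
Variables (R : realType) (n : nat).

(* points of (a chart of) F^3_(2) E: coordinates x a c = u^a_I, I <-> c *)
Definition F3 := 'M[R]_(n, 10).
(* points of (a chart of) F^2_(2) E *)
Definition F2 := 'M[R]_(n, 6).

Definition proj32 (x : F3) : F2 :=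
  \matrix_(a, c) x a (widen_ord (isT : (6 <= 10)%N) c).

Definition partial m k (a : 'I_m) (c : 'I_k) (f : 'M[R]_(m, k) -> R)
  (x : 'M[R]_(m, k)) : R := 'D_(delta_mx a c) f x.

Fixpoint iterD (cs : seq ('I_n * 'I_6)) (f : F2 -> R) : F2 -> R :=
  match cs with
  | [::] => f
  | c :: cs' => fun y => partial c.1 c.2 (iterD cs' f) y
  end.
Definition smooth_on (W : set F2) (f : F2 -> R) : Prop :=
  forall cs y, W y -> differentiable (iterD cs f) y.

Definition regular2 (y : F2) : Prop :=
  forall s t : R, (forall a : 'I_n, s * y a (inord 1) + t * y a (inord 2) = 0) ->
    s = 0 /\ t = 0.

(* Vector fields and 1-forms on (the chart of) F^3 are given by their
   components w.r.t. d/du^a_I, resp. du^a_I. *)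
Definition dfun (f : F3 -> R) : F3 -> F3 :=
  fun x => \matrix_(a, c) partial a c f x.
Definition contr (V w : F3 -> F3) : F3 -> R :=
  fun x => \sum_(a < n) \sum_(c < 10) V x a c * w x a c.
(* i_V (d w) *)
Definition contrd (V w : F3 -> F3) : F3 -> F3 :=
  fun x => \matrix_(a, c) \sum_(b < n) \sum_(e < 10)
     V x b e * (partial b e (fun y => w y a c) x - partial a c (fun y => w y b e) x).
(* Lie derivative of a 1-form: d i_V + i_V d *)
Definition lie (V w : F3 -> F3) : F3 -> F3 :=
  fun x => dfun (contr V w) x + contrd V w x.
Definition lieF (V : F3 -> F3) (f : F3 -> R) : F3 -> R := contr V (dfun f).

(* total derivative T_i along F^3 -> F^2 *)
Definition Tf (i : 'I_2) : F3 -> F3 :=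
  fun x => \matrix_(a, c) if (lev c <= 2)%N then x a (shift i c) else 0.
(* vertical endomorphism S^j on F^3 acting on vectors *)
Definition Svec (j : 'I_2) (V : F3 -> F3) : F3 -> F3 :=
  fun x => \matrix_(a, c') \sum_(c < 10 | (lev c <= 2)%N && (shift j c == c'))
      (lev c).+1%:R * V x a c.
(* S^j acting on 1-forms: (S^j w)(X) = w(S^j X) *)
Definition Sform (j : 'I_2) (w : F3 -> F3) : F3 -> F3 :=
  fun x => \matrix_(a, c) if (lev c <= 2)%N then (lev c).+1%:R * w x a (shift j c) else 0.

Definition Delta1 (i l : 'I_2) := Svec i (Tf l).
Definition Delta2 (i j l : 'I_2) := Svec i (Svec j (Tf l)).
Definition Delta3 (i j k l : 'I_2) := Svec i (Svec j (Svec k (Tf l))).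

Definition hilbert (L : F2 -> R) (m : 'I_2) : F3 -> F3 :=
  let dL := dfun (L \o proj32) in
  fun x => Sform m dL x - 2^-1 *: \sum_(j < 2) lie (Tf j) (Sform j (Sform m dL)) x.

Definition homogeneous (W : set F2) (L : F2 -> R) : Prop :=
  forall x : F3, W (proj32 x) -> forall i j k : 'I_2,
    lieF (Delta1 i j) (L \o proj32) x = (i == j)%:R * L (proj32 x) /\
    lieF (Delta2 i k j) (L \o proj32) x = 0.

End Frames.

(* Main.v *)
Require Import Defs.
From HB Require Import structures.
From mathcomp Require Import all_boot all_order all_algebra.
From mathcomp Require Import all_classical all_reals all_analysis.
From mathcomp Require Import ring lra.
Import Order.TTheory GRing.Theory Num.Theory.
Import numFieldNormedType.Exports.
Local Open Scope classical_set_scope.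
Local Open Scope ring_scope.

Set Implicit Arguments. Unset Strict Implicit.
Local Notation sh := Defs.shift.

Ltac cases_ic i c :=
  case: i => [[|[|//]]] ?; case: c => [[|[|[|[|[|[|[|[|[|[|//]]]]]]]]]] ?];
  rewrite /lev /pq /Defs.shift /colof /= ?inordK.

Lemma lev_sh (i : 'I_2) (c : 'I_10) : (lev c <= 2)%N -> lev (sh i c) = (lev c).+1.
Proof.
case: i => [[|[|//]]] ?; case: c => [[|[|[|[|[|[|[|[|[|[|//]]]]]]]]]] ?].
all: rewrite {1}/lev /pq /= => H //.
all: by rewrite /lev /pq /Defs.shift /colof /= inordK.
Qed.
Lemma lev0 (c : 'I_10) : (lev c == 0)%N = (c == ord0).
Proof. by case: c => [[|[|[|[|[|[|[|[|[|[|//]]]]]]]]]] ?]. Qed.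
Lemma lev3 (c : 'I_10) : (lev c <= 3)%N.
Proof. by case: c => [[|[|[|[|[|[|[|[|[|[|//]]]]]]]]]] ?]. Qed.
Lemma lev6 (c : 'I_10) : (lev c <= 2)%N = (c < 6)%N.
Proof. by case: c => [[|[|[|[|[|[|[|[|[|[|//]]]]]]]]]] ?]. Qed.
Lemma sj_inj (i j : 'I_2) : (sh i ord0 == sh j ord0) = (i == j).
Proof. by case: i => [[|[|//]]] ?; case: j => [[|[|//]]] ?; rewrite /Defs.shift /colof -val_eqE /= !inordK. Qed.
Lemma lev_ord0 : lev (ord0 : 'I_10) = 0%N.
Proof. by []. Qed.

Section An.
Variable R : realType.

Lemma QR (V1 V2 : normedModType R) (f : V1 -> R) (g : V2 -> R) x v y w :
 (forall h : R, f (h *: v + x) = g (h *: w + y)) ->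
 'D_v f x = 'D_w g y /\ (derivable f x v <-> derivable g y w).
Proof.
move=> H.
have E : (fun h : R => h^-1 *: ((f \o shift x) (h *: v) - f x)) =
         (fun h : R => h^-1 *: ((g \o shift y) (h *: w) - g y)).
  apply/funext => h /=; rewrite /shift /= H.
  by have := H 0; rewrite !scale0r !add0r => ->.
by rewrite /derive /derivable E.
Qed.

Variable n : nat.

Lemma proj32_lin (h : R) (v x : F3 R n) : proj32 (h *: v + x) = h *: proj32 v + proj32 x.
Proof. by apply/matrixP => a c; rewrite !mxE. Qed.

Lemma Dproj (f : F2 R n -> R) (z v : F3 R n) :
  'D_v (f \o @proj32 R n) z = 'D_(proj32 v) f (proj32 z) /\
  (derivable (f \o @proj32 R n) z v <-> derivable f (proj32 z) (proj32 v)).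
Proof. by apply: QR => h /=; rewrite proj32_lin. Qed.

Lemma D_hi (f : F2 R n -> R) a (c : 'I_10) z : (6 <= c)%N -> partial a c (f \o @proj32 R n) z = 0.
Proof.
move=> hc; rewrite /partial (Dproj f z _).1.
have -> : proj32 (delta_mx a c : F3 R n) = 0 :> F2 R n.
  apply/matrixP => b e; rewrite !mxE.
  case: (b == a) => //=; case: eqP => // E.
  by move: (ltn_ord e); rewrite -[nat_of_ord e]/(nat_of_ord (widen_ord (isT : (6 <= 10)%N) e)) E ltnNge hc.
exact: derive0.
Qed.

Lemma D_lo_fun (f : F2 R n -> R) a (c : 'I_10) (hc : (c < 6)%N) :
  partial a c (f \o @proj32 R n) = partial a (Ordinal hc) f \o @proj32 R n.
Proof.
apply/funext => z; rewrite /partial (Dproj f z _).1 /=.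
congr ('D_ _ f _); apply/matrixP => b e; rewrite !mxE; congr ((_ && _)%:R).
Qed.

Lemma coordD a c b e (y : F3 R n) :
  partial a c (fun z : F3 R n => z b e) y = ((b == a) && (e == c))%:R /\
  derivable (fun z : F3 R n => z b e) y (delta_mx a c).
Proof.
have [E1 E2] : 'D_(delta_mx a c) (fun z : F3 R n => z b e) y = 'D_(delta_mx a c b e) (@id R^o) (y b e) /\
   (derivable (fun z : F3 R n => z b e) y (delta_mx a c) <-> derivable (@id R^o) (y b e) (delta_mx a c b e)).
  by apply: QR => h; rewrite !mxE.
split; first by rewrite /partial E1 derive_id mxE.
by apply/E2; exact: derivable_id.
Qed.

End An.

Section Main.
Variables (R : realType) (n : nat) (L : F2 R n -> R).
Local Notation F := (L \o @proj32 R n).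
Local Notation dL := (dfun F).
Definition sj (j : 'I_2) : 'I_10 := sh j ord0.

Lemma lev_sj j : lev (sj j) = 1%N.
Proof. by rewrite /sj lev_sh lev_ord0. Qed.
Lemma lev_sjj m j : lev (sh m (sj j)) = 2%N.
Proof. by rewrite lev_sh lev_sj. Qed.
Lemma sjj6 m j : (sh m (sj j) < 6)%N.
Proof. by rewrite -lev6 lev_sjj. Qed.

Lemma w_entry m j z a c : Sform j (Sform m dL) z a c =
   (c == ord0)%:R * (2 * partial a (sh m (sj j)) F z).
Proof.
rewrite /Sform /dfun /= !mxE.
case: (eqVneq c ord0) => [->|c0].
  rewrite lev_ord0 /= -/(sj j) lev_sj /= ?mxE; ring.
have l1 : (0 < lev c)%N by rewrite lt0n lev0.
rewrite mul0r.
case: (leqP (lev c) 2) => h2 //.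
rewrite lev_sh //.
case: (leqP (lev c) 1) => h1.
  have lc : lev c = 1%N by apply/eqP; rewrite eqn_leq h1.
  have l2 : lev (sh j c) = 2%N by rewrite lev_sh ?lc.
  rewrite lc /= ?mxE D_hi ?mulr0 //.
  by rewrite leqNgt -lev6 lev_sh l2.
have -> : lev c = 2%N by apply/eqP; rewrite eqn_leq h2.
by rewrite /= mulr0.
Qed.


Lemma Tf0 l (z : F3 R n) a : Tf l z a ord0 = z a (sj l).
Proof. by rewrite /Tf mxE lev_ord0. Qed.

Lemma contr_w m j z : contr (Tf j) (Sform j (Sform m dL)) z =
  \sum_(b < n) z b (sj j) * (2 * partial b (sh m (sj j)) F z).
Proof.
rewrite /contr; apply: eq_bigr => b _.
rewrite (bigD1 ord0) //= big1 ?addr0 => [|e e0]; rewrite w_entry ?eqxx ?(negbTE e0) ?Tf0 /=; ring.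
Qed.

Lemma contr_Svec i (V w : F3 R n -> F3 R n) z :
  contr (Svec i V) w z = contr V (Sform i w) z.
Proof.
rewrite /contr; apply: eq_bigr => a _.
transitivity (\sum_(c' < 10) \sum_(c < 10)
   (if (lev c <= 2)%N && (sh i c == c') then (lev c).+1%:R * V z a c * w z a c' else 0)).
  apply: eq_bigr => c' _; rewrite /Svec mxE big_distrl /= big_mkcond /=.
  by apply: eq_bigr => c _; case: ifP; rewrite ?mul0r.
rewrite exchange_big /=; apply: eq_bigr => c _.
rewrite /Sform mxE; case: ifP => hc /=.
  rewrite -big_mkcond /= (big_pred1 (sh i c)) => [|c'] /=; last by rewrite eq_sym.
  by rewrite mulrA [V z a c * _]mulrC.
by rewrite big1 ?mulr0.
Qed.


Lemma sum_delta (g : 'I_n -> R) a (P : bool) :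
  \sum_(b < n) g b * ((b == a) && P)%:R = g a * P%:R.
Proof.
rewrite (bigD1 a) //= eqxx big1 ?addr0 // => b ba.
by rewrite (negbTE ba) mulr0.
Qed.

Lemma partial0 a c (z : F3 R n) : partial a c (fun _ : F3 R n => (0:R)) z = 0.
Proof. exact: derive_cst. Qed.

Lemma lie_entry (y : F3 R n)
  (Hd : forall b (c' : 'I_6), differentiable (partial b c' L) (proj32 y))
  m j a c : c != ord0 ->
  lie (Tf j) (Sform j (Sform m dL)) y a c =
    (c == sj j)%:R * (2 * partial a (sh m (sj j)) F y).
Proof.
move=> c0.
set G := fun b => partial b (sh m (sj j)) F.
have dG : forall b v, derivable (G b) y v.
  move=> b v; rewrite /G (D_lo_fun L b (sjj6 m j)).
  by apply/(Dproj _ _ _).2; exact: diff_derivable.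
have Ef : contr (Tf j) (Sform j (Sform m dL)) =
   \sum_(b < n) ((fun z : F3 R n => z b (sj j)) * (2 \*o G b)).
  by apply/funext => z; rewrite contr_w fct_sumE.
have E1 : forall b e, partial b e (fun z => Sform j (Sform m dL) z a c) y = 0.
  move=> b e; rewrite -(partial0 b e y).
  have -> : (fun z => Sform j (Sform m dL) z a c) = (fun _ => 0).
    by apply/funext => z; rewrite w_entry (negbTE c0) mul0r.
  by [].
have E2 : forall b e, partial a c (fun z => Sform j (Sform m dL) z b e) y =
    (e == ord0)%:R * (2 * partial a c (G b) y).
  move=> b e; case: (eqVneq e ord0) => [->|e0].
    have -> : (fun z => Sform j (Sform m dL) z b ord0) = 2 \*o G b.
      by apply/funext => z; rewrite w_entry eqxx mul1r.
    by rewrite mul1r /partial deriveMl //; exact: dG.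
  have -> : (fun z => Sform j (Sform m dL) z b e) = (fun _ => 0).
    by apply/funext => z; rewrite w_entry (negbTE e0) mul0r.
  by rewrite partial0 mul0r.
rewrite /lie mxE.
have -> : dfun (contr (Tf j) (Sform j (Sform m dL))) y a c =
   partial a c (contr (Tf j) (Sform j (Sform m dL))) y by rewrite /dfun mxE.
have -> : contrd (Tf j) (Sform j (Sform m dL)) y a c =
   \sum_(b < n) \sum_(e < 10) Tf j y b e *
      (partial b e (fun z => Sform j (Sform m dL) z a c) y -
       partial a c (fun z => Sform j (Sform m dL) z b e) y).
  by rewrite /contrd mxE.
have Ein : forall b, \sum_(e < 10) Tf j y b e *
      (partial b e (fun z => Sform j (Sform m dL) z a c) y -
       partial a c (fun z => Sform j (Sform m dL) z b e) y) =
    - (y b (sj j) * (2 * partial a c (G b) y)).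
  move=> b; rewrite (bigD1 ord0) //= big1 => [|e e0].
    by rewrite E1 E2 eqxx Tf0 /=; ring.
  by rewrite E1 E2 (negbTE e0) /=; ring.
rewrite (eq_bigr _ (fun b _ => Ein b)) sumrN Ef /partial derive_sum; last first.
  move=> b; apply: derivableM; first exact: (coordD a c b (sj j) y).2.
  by apply: derivableM; [exact: derivable_cst | exact: dG].
have Et : forall b : 'I_n, 'D_(delta_mx a c) ((fun z : F3 R n => z b (sj j)) * (2 \*o G b)) y =
   y b (sj j) * (2 * partial a c (G b) y) + (2 * G b y) * ((b == a) && (sj j == c))%:R.
  move=> b; rewrite deriveM; [|exact: (coordD a c b (sj j) y).2|]; last first.
    by apply: derivableM; [exact: derivable_cst | exact: dG].
  rewrite deriveMl; last exact: dG.
  by have := (coordD a c b (sj j) y).1; rewrite /partial => ->.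
rewrite (eq_bigr _ (fun b _ => Et b)) big_split /= sum_delta addrAC subrr add0r.
by rewrite eq_sym /G mulrC.
Qed.

Lemma th_entry (y : F3 R n)
  (Hd : forall b (c' : 'I_6), differentiable (partial b c' L) (proj32 y))
  m a c : c != ord0 ->
  hilbert L m y a c = (if (lev c <= 2)%N then (lev c).+1%:R * partial a (sh m c) F y else 0)
     - 2^-1 * \sum_(j < 2) (c == sj j)%:R * (2 * partial a (sh m (sj j)) F y).
Proof.
move=> c0; rewrite /hilbert /= !mxE summxE.
congr (_ - _ * _); apply: eq_bigr => j _; exact: lie_entry.
Qed.

Lemma th_1 (y : F3 R n)
  (Hd : forall b (c' : 'I_6), differentiable (partial b c' L) (proj32 y))
  m a p : hilbert L m y a (sj p) = partial a (sh m (sj p)) F y.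
Proof.
have c0 : sj p != ord0 by rewrite -lev0 lev_sj.
rewrite (th_entry Hd _ _ c0) lev_sj /=.
rewrite (bigD1 p) //= big1 => [|j jp]; last by rewrite sj_inj eq_sym (negbTE jp) mul0r.
rewrite eqxx addr0 /=; lra.
Qed.

Lemma th_hi (y : F3 R n)
  (Hd : forall b (c' : 'I_6), differentiable (partial b c' L) (proj32 y))
  m a c : (2 <= lev c)%N -> hilbert L m y a c = 0.
Proof.
move=> h2.
have c0 : c != ord0 by rewrite -lev0; case: (lev c) h2.
rewrite (th_entry Hd _ _ c0) big1 => [|j _]; last first.
  case: eqP => [E|]; last by rewrite mul0r.
  by move: h2; rewrite E lev_sj.
rewrite mulr0 subr0; case: ifP => // h3.
rewrite D_hi ?mulr0 //.
have lc : lev c = 2%N by apply/eqP; rewrite eqn_leq h3 h2.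
by rewrite leqNgt -lev6 lev_sh ?lc.
Qed.


Lemma Sth1 (y : F3 R n)
  (Hd : forall b (c' : 'I_6), differentiable (partial b c' L) (proj32 y))
  m i a c : Sform i (hilbert L m) y a c = (c == ord0)%:R * partial a (sh m (sj i)) F y.
Proof.
rewrite /Sform mxE.
case: (eqVneq c ord0) => [->|c0].
  by rewrite lev_ord0 /= -/(sj i) (th_1 Hd) mul1r.
rewrite mul0r; case: ifP => // h.
rewrite (th_hi Hd) ?mulr0 // lev_sh //.
by move: c0; rewrite -lev0; case: (lev c).
Qed.

Lemma Sth2 (y : F3 R n)
  (Hd : forall b (c' : 'I_6), differentiable (partial b c' L) (proj32 y))
  m i j a c : Sform j (Sform i (hilbert L m)) y a c = 0.
Proof.
rewrite {1}/Sform mxE; case: ifP => // h.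
rewrite (Sth1 Hd).
suff -> : (sh j c == ord0) = false by rewrite mul0r mulr0.
by rewrite -lev0 lev_sh.
Qed.

Lemma Sth3 (y : F3 R n)
  (Hd : forall b (c' : 'I_6), differentiable (partial b c' L) (proj32 y))
  m i j k a c : Sform k (Sform j (Sform i (hilbert L m))) y a c = 0.
Proof.
rewrite {1}/Sform mxE; case: ifP => // h.
by rewrite (Sth2 Hd) mulr0.
Qed.

Lemma contr_T0 l (w : F3 R n -> F3 R n) z (g : 'I_n -> R) :
  (forall a c, w z a c = (c == ord0)%:R * g a) ->
  contr (Tf l) w z = \sum_(a < n) z a (sj l) * g a.
Proof.
move=> Hw; rewrite /contr; apply: eq_bigr => a _.
rewrite (bigD1 ord0) //= big1 => [|e e0]; last by rewrite Hw (negbTE e0) mul0r mulr0.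
by rewrite Hw eqxx Tf0 mul1r addr0.
Qed.

Lemma contr_zero (V w : F3 R n -> F3 R n) z :
  (forall a c, w z a c = 0) -> contr V w z = 0.
Proof.
move=> Hw; rewrite /contr big1 // => a _; rewrite big1 // => c _.
by rewrite Hw mulr0.
Qed.

End Main.

Theorem lemma2 (R : realType) (n : nat) (W : set (F2 R n)) (L : F2 R n -> R) :
  open W -> (forall y, W y -> regular2 y) -> smooth_on W L ->
  homogeneous W L ->
  forall x : F3 R n, W (proj32 x) -> forall i j k l m : 'I_2,
    contr (Delta1 i l) (hilbert L m) x = 0 /\
    contr (Delta2 i j l) (hilbert L m) x = 0 /\
    contr (Delta3 i j k l) (hilbert L m) x = 0.
Proof.
move=> _ _ Hs Hh x Wx i j k l m.
have Hd : forall b (c' : 'I_6), differentiable (partial b c' L) (proj32 x).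
  by move=> b c'; exact: (Hs [:: (b, c')] _ Wx).
split; last split.
- rewrite /Delta1 contr_Svec (contr_T0 _ (Sth1 Hd m i)).
  have [_ H2] := Hh x Wx m l i.
  move: H2; rewrite /lieF /Delta2 !contr_Svec (contr_T0 _ (w_entry L m i x)).
  have -> : \sum_(a < n) x a (sj l) * (2 * partial a (sh m (sj i)) (L \o @proj32 R n) x) =
     2 * \sum_(a < n) x a (sj l) * partial a (sh m (sj i)) (L \o @proj32 R n) x.
    by rewrite mulr_sumr; apply: eq_bigr => a _; ring.
  by move/eqP; rewrite mulf_eq0 pnatr_eq0 /= => /eqP.
- by rewrite /Delta2 !contr_Svec; apply: contr_zero => a c; exact: Sth2.
- by rewrite /Delta3 !contr_Svec; apply: contr_zero => a c; exact: Sth3.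
Qed.
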